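(* Let $J\subseteq S$ and $s\in S$. (1) If $s\in J$, then modulo $G_q(\emptyset)$, $\tau^+_Jt_s$ reduces to $(-1)^{\#J+1}q\tau^-_J$ and $\tau^-_Jt_s$ reduces to $(-1)^{\#J+1}\tau^+_J$. (2) If $s\notin J$ and $J''=\{j\in J\mid s<j\}$, then modulo $G_q(\emptyset)$, $\tau^+_Jt_s$ reduces to $(-1)^{\#J''}\tau^+_{J\cup\{s\}}+(-1)^{\#J+1}q\tau^-_J$ and $\tau^-_Jt_s$ reduces to $(-1)^{\#J''}\tau^-_{J\cup\{s\}}+(-1)^{\#J+1}\tau^+_J$.
   Context: $S$ is a finite set with a total order $<$, $R$ a commutative ring with $1$, $q\in R$, $A=R\langle t_s\mid s\in S\rangle$. For $J=\{j_1<\dots<j_{\#J}\}$, $t_J=t_{j_1}\cdots t_{j_{\#J}}$; for $I=\{j_{\alpha_1}<\dots<j_{\alpha_{\#I}}\}\subseteq J$, $\ell_J(I)=\sum_\nu(\alpha_\nu-\nu)$; $\tau^-_J=\sum_{I\subseteq J,\ \#I\text{ odd}}(-1)^{\ell_J(I)}(-q)^{(\#I-1)/2}t_{J\setminus I}$, $\tau^+_J=\sum_{I\subseteq J,\ \#I\text{ even}}(-1)^{\ell_J(I)}(-q)^{\#I/2}t_{J\setminus I}$. $G_q(\emptyset)=\{t_s^2-q: s\in S\}\cup\{t_rt_s+t_st_r-2q: s<r\}$, with leading monomials $t_s^2$ and $t_rt_s$ ($s<r$) for the degree lexicographic order (words compared by length, then lexicographically from the left). For a set $\mathcal I$ of elements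 with leading coefficient $1$, a reduction of $f$ modulo $\mathcal I$ replaces a term $c\,umv$ of $f$, where $m$ is the leading monomial of some $g\in\mathcal I$, by $c\,u(m-g)v$; $f$ reduces to $h$ if $h$ is obtained from $f$ by finitely many (possibly zero) reductions. *)

(* Defs.v *)
From HB Require Import structures.
From mathcomp Require Import all_boot all_order all_algebra.
Set Implicit Arguments. Unset Strict Implicit. Unset Printing Implicit Defensive.
Import Order.TTheory GRing.Theory.
Local Open Scope ring_scope.

(* Elements of the free algebra A = R<t_s | s in S> are represented by their
   coefficient functions  word -> R  (word = seq S, a word t_{w1}...t_{wn}).
   Equality of elements is pointwise equality of coefficients. *)
Section FreeAlg.
Variables (d : Order.disp_t) (S : finOrderType d) (R : comPzRingType) (q : R).

Definition word := seq S.
Definition elt := word -> R.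

Definition mono (w : word) : elt := fun x => (x == w)%:R.
Definition eadd (f g : elt) : elt := fun x => f x + g x.
Definition escale (c : R) (f : elt) : elt := fun x => c * f x.
Definition emul (f g : elt) : elt :=
  fun w => \sum_(i < (size w).+1) f (take i w) * g (drop i w).

Definition sorted_enum (J : {set S}) : word := sort (<=%O) (enum J).
Definition tJ (J : {set S}) : word := sorted_enum J.

(* ell_J(I) = sum_nu (alpha_nu - nu), where I = {j_{alpha_1} < ... < j_{alpha_#I}} *)
Definition ell (J I : {set S}) : nat :=
  (* x = j_{alpha_nu} is the nu-th element of sorted I; alpha_nu, nu are its
     positions in sorted J and sorted I respectively *)
  \sum_(x <- sorted_enum I) (index x (sorted_enum J) - index x (sorted_enum I))%N.

Definition tau_minus (J : {set S}) : elt := fun w =>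
  \sum_(I in powerset J | odd #|I|)
     (-1) ^+ ell J I * (- q) ^+ ((#|I|).-1)./2 * mono (tJ (J :\: I)) w.

Definition tau_plus (J : {set S}) : elt := fun w =>
  \sum_(I in powerset J | ~~ odd #|I|)
     (-1) ^+ ell J I * (- q) ^+ (#|I|)./2 * mono (tJ (J :\: I)) w.

(* G_q(emptyset), as pairs (leading monomial, element) *)
Definition Gq (m : word) (g : elt) : Prop :=
  (exists s : S, m = [:: s; s] /\ g = eadd (mono [:: s; s]) (escale (- q) (mono [::])))
  \/ (exists s r : S, (s < r)%O /\ m = [:: r; s] /\
        g = eadd (eadd (mono [:: r; s]) (mono [:: s; r])) (escale (- (2%:R * q)) (mono [::]))).

(* one reduction: replace the term c.umv of f (c = coefficient of umv in f)
   by c.u(m-g)v, i.e. h = f - c.ugv *)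
Definition red1 (f h : elt) : Prop :=
  exists (u v m : word) (g : elt), Gq m g /\
    forall x, h x = f x - f (u ++ m ++ v) * emul (emul (mono u) g) (mono v) x.

Inductive reduces : elt -> elt -> Prop :=
| reduces_refl f h : (forall x, f x = h x) -> reduces f h
| reduces_step f g h : red1 f g -> reduces g h -> reduces f h.

End FreeAlg.

Arguments mono {d S R} w _.
Arguments eadd {d S R} f g _.
Arguments escale {d S R} c f _.
Arguments emul {d S R} f g _.
Arguments tau_minus {d S R} q J _.
Arguments tau_plus {d S R} q J _.
Arguments reduces {d S R} q _ _.

(* Main.v *)
Require Import Defs.
From HB Require Import structures.
From mathcomp Require Import all_boot all_order all_algebra.
From mathcomp Require Import ring zify.
Import Order.TTheory GRing.Theory.
Set Implicit Arguments. Unset Strict Implicit. Unset Printing Implicit Defensive.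
Local Open Scope ring_scope.

Section Dev.
Variables (d : Order.disp_t) (S : finOrderType d) (R : comPzRingType) (q : R).
Local Notation word := (seq S).
Local Notation elt := (word -> R).

Lemma catIr (w1 w2 m : word) : w1 ++ m = w2 ++ m -> w1 = w2.
Proof.
move=> H; have Hs : size w1 = size w2.
  by move/(congr1 size): H; rewrite !size_cat => /addIn.
by move/(congr1 (take (size w1))): H; rewrite take_size_cat // Hs take_size_cat.
Qed.

Lemma emul_mono_r_suf (f : elt) v y : emul f (mono v) (y ++ v) = f y.
Proof.
rewrite /emul size_cat.
have Hi : (size y < (size y + size v).+1)%N by rewrite ltnS leq_addr.
rewrite (bigD1 (Ordinal Hi)) //= take_size_cat // drop_size_cat // /mono eqxx mulr1.
rewrite big1 ?addr0 // => i Hne; rewrite /mono; case: eqP => [H|]; last by rewrite mulr0.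
exfalso; move/eqP: Hne; apply; apply/val_eqP => /=.
have Hi2 : (i <= size y + size v)%N by rewrite -ltnS.
move/(congr1 size): H; rewrite size_drop size_cat => H.
apply/eqP; move: H Hi2; rewrite /Defs.word /=; set a := size v; set b := size y. lia.
Qed.

Lemma emul_mono_r_nsuf (f : elt) v x : ~~ suffix v x -> emul f (mono v) x = 0.
Proof.
move=> Hn; rewrite /emul big1 // => i _; rewrite /mono; case: eqP => [H|]; last by rewrite mulr0.
exfalso; move/negP: Hn; apply; apply/suffixP; exists (take i x); by rewrite -H cat_take_drop.
Qed.

Lemma emul_mono_l_pre (f : elt) u y : emul (mono u) f (u ++ y) = f y.
Proof.
rewrite /emul size_cat.
have Hi : (size u < (size u + size y).+1)%N by rewrite ltnS leq_addr.
rewrite (bigD1 (Ordinal Hi)) //= take_size_cat // drop_size_cat // /mono eqxx mul1r.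
rewrite big1 ?addr0 // => i Hne; rewrite /mono; case: eqP => [H|]; last by rewrite mul0r.
exfalso; move/eqP: Hne; apply; apply/val_eqP => /=.
have Hi2 : (i <= size u + size y)%N by rewrite -ltnS.
move/(congr1 size): H; rewrite size_take size_cat => H.
apply/eqP; move: H Hi2; rewrite /Defs.word /=; set a := size u; set b := size y; case: ltnP => ? ; lia.
Qed.

Lemma emul_mono_l_npre (f : elt) u x : ~~ prefix u x -> emul (mono u) f x = 0.
Proof.
move=> Hn; rewrite /emul big1 // => i _; rewrite /mono; case: eqP => [H|]; last by rewrite mul0r.
exfalso; move/negP: Hn; apply; apply/prefixP; exists (drop i x); by rewrite -H cat_take_drop.
Qed.

Lemma emul_lin (f g h k : elt) c :
  (forall x, g x = f x + c * h x) -> forall x, emul g k x = emul f k x + c * emul h k x.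
Proof.
move=> H x; rewrite /emul mulr_sumr -big_split /=; apply: eq_bigr => i _; rewrite H; ring.
Qed.

Lemma emul0 (f k : elt) : (forall x, f x = 0) -> forall x, emul f k x = 0.
Proof. move=> H x; rewrite /emul big1 // => i _; by rewrite H mul0r. Qed.

Lemma emul_mono_rr (F : elt) a b x :
  emul (emul F (mono a)) (mono b) x = emul F (mono (a ++ b)) x.
Proof.
case: (boolP (suffix b x)) => [/suffixP[y ->]|Hn].
  rewrite emul_mono_r_suf; case: (boolP (suffix a y)) => [/suffixP[y' ->]|Hn'].
    by rewrite emul_mono_r_suf -catA emul_mono_r_suf.
  rewrite !emul_mono_r_nsuf //; apply/negP => /suffixP[w]; rewrite catA => /catIr H.
  by move/negP: Hn'; apply; apply/suffixP; exists w.
rewrite !emul_mono_r_nsuf //; apply/negP => /suffixP[w]; rewrite catA => H.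
by move/negP: Hn; apply; apply/suffixP; exists (w ++ a).
Qed.

Lemma emul_nil (F : elt) x : emul F (mono [::]) x = F x.
Proof. by have := emul_mono_r_suf F [::] x; rewrite cats0. Qed.

Lemma emul_mono_mono (a b x : word) : emul (mono a) (mono b) x = mono (a ++ b) x :> R.
Proof.
case: (boolP (suffix b x)) => [/suffixP[y ->]|Hn].
  rewrite emul_mono_r_suf /mono; congr ((nat_of_bool _)%:R); by apply/idP/idP => /eqP H; apply/eqP; [rewrite H | exact: catIr H].
rewrite emul_mono_r_nsuf // /mono; case: eqP => // H; exfalso; move/negP: Hn; apply; apply/suffixP.
by exists a.
Qed.

Lemma emul_scale (F k : elt) c x : emul (fun w => c * F w) k x = c * emul F k x.
Proof. rewrite /emul mulr_sumr; apply: eq_bigr => i _; ring. Qed.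

Lemma emul_sum (I : finType) (P : pred I) (F : I -> elt) k x :
  emul (fun w => \sum_(i | P i) F i w) k x = \sum_(i | P i) emul (F i) k x.
Proof.
rewrite /emul; under eq_bigr do rewrite mulr_suml; by rewrite exchange_big.
Qed.


Inductive redP (P : word -> Prop) : elt -> elt -> Prop :=
| redP_refl (f h : elt) : (forall x, f x = h x) -> redP P f h
| redP_step (f g h : elt) (u v m : word) (gg : elt) : Gq q m gg -> P (u ++ m ++ v) ->
    (forall x, g x = f x - f (u ++ m ++ v) * emul (emul (mono u) gg) (mono v) x) ->
    redP P g h -> redP P f h.

Lemma redP_reduces P f h : redP P f h -> reduces q f h.
Proof.
elim=> [f' h' H|f' g' h' u v m gg HG _ Hg _ IH]; first exact: reduces_refl.
apply: reduces_step IH; exists u, v, m, gg; split=> //.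
Qed.

Lemma redP_extl P f f' h : (forall x, f x = f' x) -> redP P f' h -> redP P f h.
Proof.
move=> E Hr; move: E; case: Hr => [f1 h1 H|f1 g1 h1 u v m gg HG HP Hg Hr] E.
  by apply: redP_refl => x; rewrite E H.
apply: (redP_step HG HP _ Hr) => x; by rewrite Hg !E.
Qed.

Lemma redP_extr P f h h' : (forall x, h x = h' x) -> redP P f h -> redP P f h'.
Proof.
move=> E Hr; move: E; elim: Hr => [f1 h1 H|f1 g1 h1 u v m gg HG HP Hg _ IH] E.
  by apply: redP_refl => x; rewrite H E.
exact: (redP_step HG HP Hg (IH E)).
Qed.

Lemma redP_trans P f g h : redP P f g -> redP P g h -> redP P f h.
Proof.
elim=> [f1 h1 H|f1 g1 h1 u v m gg HG HP Hg _ IH] Hgh.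
  exact: (redP_extl H).
exact: (redP_step HG HP Hg (IH Hgh)).
Qed.

Lemma redP_mono (P P' : word -> Prop) f h : (forall w, P w -> P' w) -> redP P f h -> redP P' f h.
Proof.
move=> HPP; elim=> [f1 h1 H|f1 g1 h1 u v m gg HG HP Hg _ IH]; first exact: redP_refl.
exact: (redP_step HG (HPP _ HP) Hg IH).
Qed.

Lemma redP_ctx P f h (r : elt) c : redP P f h -> (forall w, P w -> r w = 0) ->
  redP P (fun x => r x + c * f x) (fun x => r x + c * h x).
Proof.
move=> Hr Hv; elim: Hr => [f1 h1 H|f1 g1 h1 u v m gg HG HP Hg _ IH].
  by apply: redP_refl => x; rewrite H.
apply: (redP_step HG HP _ IH) => x; rewrite Hg (Hv (u ++ m ++ v)) //; ring.
Qed.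

Lemma redP_mulr P f h z : redP P f h ->
  redP (fun w => exists2 w', P w' & w = w' ++ [:: z])
    (emul f (mono [:: z])) (emul h (mono [:: z])).
Proof.
elim=> [f1 h1 H|f1 g1 h1 u v m gg HG HP Hg _ IH].
  apply: redP_refl => x; rewrite /emul; apply: eq_bigr => i _; by rewrite H.
apply: (redP_step (u := u) (v := v ++ [:: z]) HG _ _ IH).
  by exists (u ++ m ++ v) => //; rewrite !catA.
have Hl : forall y, g1 y = f1 y + (- f1 (u ++ m ++ v)) * emul (emul (mono u) gg) (mono v) y.
  by move=> y; rewrite Hg; ring.
move=> x; rewrite (emul_lin (mono [:: z]) Hl) emul_mono_rr.
have -> : u ++ m ++ v ++ [:: z] = (u ++ m ++ v) ++ [:: z] by rewrite !catA.
rewrite emul_mono_r_suf; ring.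
Qed.


Lemma Gq_cases m gg : Gq q m gg -> exists a b, m = [:: a; b] /\ (b <= a)%O /\
  forall y : word, y != m -> y != [:: b; a] -> y != [::] -> gg y = 0.
Proof.
case=> [[s [-> ->]]|[s [r [Hsr [-> ->]]]]].
  exists s, s; split=> //; split=> // y H1 H2 H3.
  by rewrite /eadd /escale /mono (negbTE H1) (negbTE H3) /=; ring.
exists r, s; split=> //; split; first exact: ltW.
move=> y H1 H2 H3; rewrite /eadd /escale /mono (negbTE H1) (negbTE H2) (negbTE H3) /=; ring.
Qed.

Lemma redG (ws : seq word) (f : elt) m gg : uniq ws -> all (sorted <%O) ws ->
  (forall w, w \notin ws -> f w = 0) -> Gq q m gg ->
  redP (fun w => exists2 w0, w0 \in ws & w = w0 ++ m)
    (emul f (mono m)) (fun x => emul f (mono m) x - emul f gg x).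
Proof.
move=> + + + HG; have [a [b [Em [Hba Hgg]]]] := Gq_cases HG.
elim: ws f => [|w0 ws IH] f Hu Hs Hf.
  apply: redP_refl => x; have H0 : forall y, f y = 0 by move=> y; apply: Hf.
  by rewrite !(emul0 _ H0) subr0.
move/andP: Hu => [Hw0 Hu]; move/andP: Hs => [Sw0 Hs].
pose f' := fun x => if x == w0 then 0 else f x.
have Hf' : forall w, w \notin ws -> f' w = 0.
  move=> w Hw; rewrite /f'; case: eqP => // Hne; apply: Hf.
  by rewrite inE negb_or Hw andbT; apply/eqP.
have Hdec : forall x, f x = f' x + f w0 * mono w0 x.
  by move=> x; rewrite /f' /mono; case: eqP => [->|_] /=; ring.
pose r := fun x => f w0 * (emul (mono w0) (mono m) x - emul (mono w0) gg x).
have Hstep : redP (fun w => exists2 w1, w1 \in ws & w = w1 ++ m)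
   (fun x => r x + 1 * emul f' (mono m) x)
   (fun x => r x + 1 * (emul f' (mono m) x - emul f' gg x)).
  apply: redP_ctx; first exact: IH.
  move=> w [w1 Hw1 ->]; rewrite /r emul_mono_r_suf.
  have Hne : w1 != w0 by apply/eqP => E; move: Hw0; rewrite -E Hw1.
  rewrite /mono (negbTE Hne) /=.
  case: (boolP (prefix w0 (w1 ++ m))) => [/prefixP [y Hy]|Hn]; last first.
    by rewrite emul_mono_l_npre //; ring.
  rewrite Hy emul_mono_l_pre Hgg; first by ring.
  - apply/eqP => Ey; move: Hy; rewrite Ey => /catIr E; by rewrite E eqxx in Hne.
  - apply/eqP => Ey; move: (Hy); rewrite Ey Em => Hy'.
    have Eab : b = a by move/(congr1 (last a)): Hy'; rewrite !last_cat.
    move: Hy'; rewrite Eab => /catIr E; by rewrite E eqxx in Hne.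
  - apply/eqP => Ey; move: Hy; rewrite Ey cats0 => E; move: Sw0; rewrite -E Em.
    move/cat_sorted2 => [_] /=; rewrite andbT => Hab.
    by move: Hba; rewrite leNgt Hab.
apply: (redP_step (u := w0) (v := [::]) HG _ _
          (redP_mono _ (redP_extr _ Hstep))).
- by exists w0; rewrite ?mem_head ?cats0.
- move=> x; rewrite cats0 emul_mono_r_suf emul_nil (emul_lin (mono m) Hdec) /r; ring.
- move=> w [w1 Hw1 ->]; exists w1 => //; by rewrite inE Hw1 orbT.
- move=> x; rewrite (emul_lin (mono m) Hdec) (emul_lin gg Hdec) /r; ring.
Qed.

End Dev.

Section Dev2.
Variables (d : Order.disp_t) (S : finOrderType d) (R : comPzRingType) (q : R).
Local Notation word := (seq S).
Local Notation elt := (word -> R).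

Lemma sgn2 n : (-1) ^+ n * (-1) ^+ n = 1 :> R.
Proof. by rewrite -exprD addnn -mul2n exprM expr2 mulrNN mulr1 expr1n. Qed.

Lemma sgnB a b : (b <= a)%N -> (-1) ^+ (a - b) = (-1) ^+ a * (-1) ^+ b :> R.
Proof. by move=> H; rewrite -{2}(subnK H) exprD -mulrA sgn2 mulr1. Qed.

Lemma sgn_even n : ~~ odd n -> (-1) ^+ n = 1 :> R.
Proof. by move=> H; rewrite -signr_odd (negbTE H). Qed.

Lemma tJ_sorted (K : {set S}) : sorted <%O (tJ K).
Proof. by rewrite /tJ /sorted_enum sort_lt_sorted enum_uniq. Qed.

Lemma mem_tJ (K : {set S}) x : (x \in tJ K) = (x \in K).
Proof. by rewrite /tJ /sorted_enum mem_sort mem_enum. Qed.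

Lemma size_se (K : {set S}) : size (sorted_enum K) = #|K|.
Proof. by rewrite /sorted_enum size_sort cardE. Qed.

Lemma seU_max (K : {set S}) z : (forall j, j \in K -> (j < z)%O) ->
  sorted_enum (z |: K) = sorted_enum K ++ [:: z].
Proof.
move=> Hz; have zK : z \notin K by apply/negP => /Hz; rewrite ltxx.
have Hl : sorted <%O (sorted_enum K ++ [:: z]).
  have := tJ_sorted K; rewrite /tJ.
  have : forall x, x \in sorted_enum K -> (x < z)%O by move=> x; rewrite mem_sort mem_enum; exact: Hz.
  case: (sorted_enum K) => [|x p] //= Hm Hs.
  rewrite cats1 rcons_path Hs /=; apply: Hm; exact: mem_last.
apply: le_sorted_eq; first exact: sort_le_sorted.
  by move: Hl; rewrite lt_sorted_uniq_le => /andP[].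
apply: uniq_perm.
- by rewrite sort_uniq enum_uniq.
- by move: Hl; rewrite lt_sorted_uniq_le => /andP[].
- move=> x; rewrite mem_cat mem_sort mem_enum !inE mem_sort mem_enum orbC //.
Qed.

Lemma sorted_tJ (w : word) : sorted <%O w -> tJ [set x in w] = w.
Proof.
move=> Hw; have := Hw; rewrite lt_sorted_uniq_le => /andP [Hu Hle].
apply: le_sorted_eq => //; first exact: sort_le_sorted.
apply: uniq_perm => //; first by rewrite sort_uniq enum_uniq.
by move=> x; rewrite mem_sort mem_enum inE.
Qed.

Lemma tJ0 : tJ (set0 : {set S}) = [::].
Proof. by rewrite /tJ /sorted_enum enum_set0. Qed.

Definition good (L : {set S}) (w : word) := sorted <%O w && all (fun x => x \in L) w.

Lemma tau_plus_supp K w : ~~ good K w -> tau_plus q K w = 0.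
Proof.
move=> H; rewrite /tau_plus big1 // => I _; rewrite /mono; case: eqP => [E|_]; last by rewrite mulr0.
exfalso; move/negP: H; apply; rewrite /good E tJ_sorted /=.
by apply/allP => x; rewrite mem_tJ inE => /andP[].
Qed.

Lemma tau_minus_supp K w : ~~ good K w -> tau_minus q K w = 0.
Proof.
move=> H; rewrite /tau_minus big1 // => I _; rewrite /mono; case: eqP => [E|_]; last by rewrite mulr0.
exfalso; move/negP: H; apply; rewrite /good E tJ_sorted /=.
by apply/allP => x; rewrite mem_tJ inE => /andP[].
Qed.

Lemma tau_plus0 (x : word) : tau_plus q set0 x = mono [::] x.
Proof.
rewrite /tau_plus (big_pred1 set0); last first.
  by move=> I /=; rewrite powersetE subset0; case: eqP => // ->; rewrite cards0.
by rewrite /ell /sorted_enum enum_set0 big_nil setD0 tJ0 cards0 /=; ring.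
Qed.

Lemma tau_minus0 (x : word) : tau_minus q set0 x = 0.
Proof.
rewrite /tau_minus big_pred0 // => I /=; rewrite powersetE subset0.
by case: eqP => // ->; rewrite cards0.
Qed.

Lemma subU1 (z : S) (A B : {set S}) : z \notin A -> z \notin B ->
  (z |: A \subset z |: B) = (A \subset B).
Proof.
move=> zA zB; apply/subsetP/subsetP => H x Hx.
  have := H x; rewrite !inE Hx orbT => /(_ isT) /orP [/eqP Exz|//].
  by rewrite -Exz Hx in zA.
by move: Hx; rewrite !inE => /orP [->//|/H ->]; rewrite orbT.
Qed.

Lemma sum_powU (F : {set S} -> R) (z : S) (K : {set S}) (P : nat -> bool) : z \notin K ->
  \sum_(I in powerset (z |: K) | P #|I|) F I =
  \sum_(I in powerset K | P #|I|) F I + \sum_(I in powerset K | P #|I|.+1) F (z |: I).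
Proof.
move=> zK; rewrite (bigID (fun I : {set S} => z \in I)) /= addrC; congr (_ + _).
  apply: eq_bigl => I; rewrite !powersetE -{2}(setU1K zK) subsetD1.
  by case: (I \subset _); case: (P _); case: (z \in I).
rewrite (reindex_onto (fun I => z |: I) (fun I => I :\ z)) /=; last first.
  by move=> I /andP [_ HI]; rewrite setD1K.
apply: eq_bigl => I; case: (boolP (z \in I)) => HzI.
  have -> : ((z |: I) :\ z == I) = false.
    by apply/negbTE/eqP => E; move: HzI; rewrite -E !inE eqxx.
  rewrite !andbF; apply/esym/negbTE; rewrite powersetE; apply/negP => /andP [/subsetP/(_ z HzI) H _]; move: H.
  by apply/negP.
by rewrite setU1K // eqxx andbT setU11 andbT cardsU1 HzI !powersetE subU1.
Qed.


Lemma ell1 (K I : {set S}) z : (forall j, j \in K -> (j < z)%O) -> I \subset K ->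
  ell (z |: K) I = ell K I.
Proof.
move=> Hz HI; rewrite /ell seU_max //; apply: eq_big_seq => x Hx.
have HxK : x \in sorted_enum K.
  by move: Hx; rewrite !mem_sort !mem_enum => /(subsetP HI).
by rewrite index_cat HxK.
Qed.

Lemma ell2 (K I : {set S}) z : (forall j, j \in K -> (j < z)%O) -> I \subset K ->
  ell (z |: K) (z |: I) = (ell K I + #|K :\: I|)%N.
Proof.
move=> Hz HI; have HzI : forall j, j \in I -> (j < z)%O by move=> j /(subsetP HI); exact: Hz.
have zK : z \notin K by apply/negP => /Hz; rewrite ltxx.
have zI : z \notin I by apply/negP => /HzI; rewrite ltxx.
rewrite /ell !seU_max // big_cat big_seq1 /=; congr (_ + _)%N.
  apply: eq_big_seq => x Hx.
  have HxK : x \in sorted_enum K.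
    by move: Hx; rewrite !mem_sort !mem_enum => /(subsetP HI).
  by rewrite !index_cat HxK Hx.
rewrite !index_cat !mem_sort !mem_enum (negbTE zK) (negbTE zI) /= eqxx !addn0 !size_se.
by rewrite cardsDS.
Qed.

Lemma tau_plus_rec (K : {set S}) z : (forall j, j \in K -> (j < z)%O) -> forall x,
  tau_plus q (z |: K) x =
  emul (tau_plus q K) (mono [:: z]) x + (-1) ^+ #|K| * q * tau_minus q K x.
Proof.
move=> Hz x; have zK : z \notin K by apply/negP => /Hz; rewrite ltxx.
rewrite /tau_plus /tau_minus.
rewrite (sum_powU (fun I => (-1) ^+ ell (z |: K) I * (- q) ^+ (#|I|)./2 *
    mono (tJ ((z |: K) :\: I)) x) (fun n => ~~ odd n) zK).
rewrite emul_sum mulr_sumr; congr (_ + _).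
  apply: eq_bigr => I /andP [HI _]; rewrite powersetE in HI.
  rewrite emul_scale emul_mono_mono ell1 //.
  have HzI : z \notin I by apply/negP => /(subsetP HI); apply/negP.
  have -> : (z |: K) :\: I = z |: (K :\: I).
    apply/setP => y; rewrite !inE; case: (y =P z) => [->|] //=; by rewrite HzI.
  rewrite /tJ seU_max //; move=> j; rewrite inE => /andP [_]; exact: Hz.
rewrite [RHS](eq_bigl (fun I => (I \in powerset K) && ~~ ~~ odd #|I|)); last first.
  by move=> I; rewrite negbK.
apply: eq_bigr => I /andP [HI Hodd]; rewrite powersetE in HI; rewrite negbK in Hodd.
have HzI : z \notin I by apply/negP => /(subsetP HI); apply/negP.
rewrite ell2 // cardsU1 HzI.
have -> : (z |: K) :\: (z |: I) = K :\: I.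
  apply/setP => y; rewrite !inE; case: eqP => [->|_] /=; by rewrite ?(negbTE zK) ?andbF.
rewrite exprD cardsDS // sgnB; last exact: subset_leq_card.
move: Hodd; case E: #|I| => [|m] //= Hm.
rewrite !exprS (sgn_even Hm); ring.
Qed.

Lemma tau_minus_rec (K : {set S}) z : (forall j, j \in K -> (j < z)%O) -> forall x,
  tau_minus q (z |: K) x =
  emul (tau_minus q K) (mono [:: z]) x + (-1) ^+ #|K| * tau_plus q K x.
Proof.
move=> Hz x; have zK : z \notin K by apply/negP => /Hz; rewrite ltxx.
rewrite /tau_plus /tau_minus.
rewrite (sum_powU (fun I => (-1) ^+ ell (z |: K) I * (- q) ^+ (#|I|).-1./2 *
    mono (tJ ((z |: K) :\: I)) x) (fun n => odd n) zK).
rewrite emul_sum mulr_sumr; congr (_ + _).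
  apply: eq_bigr => I /andP [HI _]; rewrite powersetE in HI.
  rewrite emul_scale emul_mono_mono ell1 //.
  have HzI : z \notin I by apply/negP => /(subsetP HI); apply/negP.
  have -> : (z |: K) :\: I = z |: (K :\: I).
    apply/setP => y; rewrite !inE; case: (y =P z) => [->|] //=; by rewrite HzI.
  rewrite /tJ seU_max //; move=> j; rewrite inE => /andP [_]; exact: Hz.
apply: eq_bigr => I /andP [HI Hodd]; rewrite powersetE in HI.
have HzI : z \notin I by apply/negP => /(subsetP HI); apply/negP.
rewrite ell2 // cardsU1 HzI.
have -> : (z |: K) :\: (z |: I) = K :\: I.
  apply/setP => y; rewrite !inE; case: eqP => [->|_] /=; by rewrite ?(negbTE zK) ?andbF.
rewrite exprD cardsDS // sgnB; last exact: subset_leq_card.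
rewrite /= in Hodd; rewrite (sgn_even Hodd) /=; ring.
Qed.

End Dev2.

Section Dev3.
Variables (d : Order.disp_t) (S : finOrderType d) (R : comPzRingType) (q : R).
Local Notation word := (seq S).
Local Notation elt := (word -> R).
Local Notation NS := (fun w : word => ~~ sorted <%O w).

Lemma set_max_ind (P : {set S} -> Prop) : P set0 ->
  (forall (z : S) (K : {set S}), (forall j, j \in K -> (j < z)%O) -> P K -> P (z |: K)) -> forall J, P J.
Proof.
move=> H0 HS J; move: {2}#|J| (erefl #|J|) => n; elim: n J => [|n IH] J HJ.
  by move/eqP: HJ; rewrite cards_eq0 => /eqP ->.
have /set0Pn [j0 Hj0] : J != set0 by rewrite -card_gt0 HJ.
case: (arg_maxP (fun x : S => x) Hj0) => z Hz Hmax.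
rewrite -(setD1K Hz); apply: HS.
  move=> j; rewrite !inE => /andP [Hne Hj]; rewrite lt_neqAle Hne /=; exact: Hmax.
have Hz2 : z \in J := Hz; apply: IH; move: HJ; rewrite (cardsD1 z J) Hz2 /= add1n; by case.
Qed.

Lemma good_sub (K L : {set S}) w : K \subset L -> good K w -> good L w.
Proof.
move=> HKL /andP [Hs Ha]; rewrite /good Hs /=; apply/allP => x Hx.
by apply: (subsetP HKL); move/allP: Ha; apply.
Qed.

Lemma sorted_rcons_lt (y : word) z : sorted <%O y -> (forall x, x \in y -> (x < z)%O) ->
  sorted <%O (y ++ [:: z]).
Proof.
case: y => [|x p] //= Hs Hm; rewrite cats1 rcons_path Hs /=; apply: Hm; exact: mem_last.
Qed.

Lemma not_good_z (K : {set S}) z w : z \notin K -> ~~ good K (w ++ [:: z]).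
Proof. by move=> zK; rewrite /good all_cat /= (negbTE zK) !andbF. Qed.

Definition Gzz (z : S) : elt := eadd (mono [:: z; z]) (escale (- q) (mono [::])).
Definition Gzs (z s : S) : elt :=
  eadd (eadd (mono [:: z; s]) (mono [:: s; z])) (escale (- (2%:R * q)) (mono [::])).

Lemma redG' (f : elt) (m : word) (gg : elt) : (forall w, ~~ sorted <%O w -> f w = 0) -> Gq q m gg ->
  redP q (fun w => exists2 w0, sorted <%O w0 & w = w0 ++ m)
    (emul f (mono m)) (fun x => emul f (mono m) x - emul f gg x).
Proof.
move=> Hf HG.
set ws := undup [seq tJ L | L : {set S}].
have Hall : all (sorted <%O) ws.
  by apply/allP => w; rewrite mem_undup => /mapP [L _ ->]; exact: tJ_sorted.
have Hsup : forall w, w \notin ws -> f w = 0.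
  move=> w Hw; apply: Hf; apply/negP => Hs; move/negP: Hw; apply.
  by rewrite mem_undup; apply/mapP; exists [set x in w]; rewrite ?mem_enum ?sorted_tJ.
have H := redG (undup_uniq _) Hall Hsup HG.
apply: (redP_mono _ H) => w [w0 Hw0 ->]; exists w0 => //.
by move/allP: Hall; apply.
Qed.


Lemma emul_linr (f g h k : elt) c :
  (forall x, g x = f x + c * h x) -> forall x, emul k g x = emul k f x + c * emul k h x.
Proof.
move=> H x; rewrite /emul mulr_sumr -big_split /=; apply: eq_bigr => i _; rewrite H; ring.
Qed.

Lemma step_eq (K : {set S}) (z : S) (F G : elt) (a : R) : z \notin K ->
  (forall w, ~~ good K w -> F w = 0) -> (forall w, ~~ good K w -> G w = 0) ->
  redP q NS (fun x => emul F (mono [:: z; z]) x + a * emul G (mono [:: z]) x)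
            (fun x => q * F x + a * emul G (mono [:: z]) x).
Proof.
move=> zK HF HG.
have HGq : Gq q [:: z; z] (Gzz z) by left; exists z.
have HFs : forall w, ~~ sorted <%O w -> F w = 0.
  by move=> w Hw; apply: HF; rewrite /good negb_and Hw.
have H1 := redG' HFs HGq.
have Hv : forall w, (exists2 w0, sorted <%O w0 & w = w0 ++ [:: z; z]) ->
    a * emul G (mono [:: z]) w = 0.
  move=> w [w0 _ ->]; have -> : w0 ++ [:: z; z] = (w0 ++ [:: z]) ++ [:: z] by rewrite -catA.
  by rewrite emul_mono_r_suf (HG _ (not_good_z _ zK)) mulr0.
have Hsub : forall w, (exists2 w0, sorted <%O w0 & w = w0 ++ [:: z; z]) -> NS w.
  by move=> w [w0 _ ->]; apply/negP => /cat_sorted2 [_] /=; rewrite ltxx.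
have H2 := redP_mono Hsub (redP_ctx 1 H1 Hv).
have Hgg : forall y, Gzz z y = mono [:: z; z] y + (- q) * mono [::] y by [].
have E1 : forall x, emul F (mono [:: z; z]) x + a * emul G (mono [:: z]) x =
   a * emul G (mono [:: z]) x + 1 * emul F (mono [:: z; z]) x by move=> x; ring.
have E2 : forall x, a * emul G (mono [:: z]) x +
    1 * (emul F (mono [:: z; z]) x - emul F (Gzz z) x) =
    q * F x + a * emul G (mono [:: z]) x.
  by move=> x; rewrite (emul_linr F Hgg) emul_nil; ring.
exact: (redP_extl E1 (redP_extr E2 H2)).
Qed.

Lemma step_lt (K : {set S}) (z s : S) (F G X Y : elt) (a : R) :
  (forall j, j \in K -> (j < z)%O) -> (s < z)%O ->
  (forall w, ~~ good K w -> F w = 0) -> (forall w, ~~ good K w -> G w = 0) ->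
  (forall w, ~~ good (s |: K) w -> X w = 0) ->
  redP q NS (emul F (mono [:: s])) X -> redP q NS (emul G (mono [:: s])) Y ->
  redP q NS (fun x => emul F (mono [:: z; s]) x + a * emul G (mono [:: s]) x)
            (fun x => - emul X (mono [:: z]) x + 2%:R * q * F x + a * Y x).
Proof.
move=> Hz Hsz HF HG HX HFX HGY.
have zK : z \notin K by apply/negP => /Hz; rewrite ltxx.
have Hsz' : (s == z) = false := lt_eqF Hsz.
have HGq : Gq q [:: z; s] (Gzs z s) by right; exists s, z.
have HFs : forall w, ~~ sorted <%O w -> F w = 0.
  by move=> w Hw; apply: HF; rewrite /good negb_and Hw.
have H1 := redG' HFs HGq.
have Hv1 : forall w, (exists2 w0, sorted <%O w0 & w = w0 ++ [:: z; s]) ->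
    a * emul G (mono [:: s]) w = 0.
  move=> w [w0 _ ->]; have -> : w0 ++ [:: z; s] = (w0 ++ [:: z]) ++ [:: s] by rewrite -catA.
  by rewrite emul_mono_r_suf (HG _ (not_good_z _ zK)) mulr0.
have Hsub1 : forall w, (exists2 w0, sorted <%O w0 & w = w0 ++ [:: z; s]) -> NS w.
  move=> w [w0 _ ->]; apply/negP => /cat_sorted2 [_] /=; rewrite andbT => Hzs.
  by move: (lt_trans Hsz Hzs); rewrite ltxx.
have R1 := redP_mono Hsub1 (redP_ctx 1 H1 Hv1).
have R2a := redP_mulr z HFX.
have Hv2 : forall w, (exists2 w', NS w' & w = w' ++ [:: z]) ->
    2%:R * q * F w + a * emul G (mono [:: s]) w = 0.
  move=> w [w' _ ->]; rewrite (HF _ (not_good_z w' zK)) emul_mono_r_nsuf; first ring.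
  apply/negP => /suffixP [y]; rewrite !cats1 => /rcons_inj [_ Ezs].
  by rewrite Ezs eqxx in Hsz'.
have Hsub2 : forall w, (exists2 w', NS w' & w = w' ++ [:: z]) -> NS w.
  by move=> w [w' Hw' ->]; apply/negP => /cat_sorted2 [Hs _]; rewrite Hs in Hw'.
have R2 := redP_mono Hsub2 (redP_ctx (-1) R2a Hv2).
have Hv3 : forall w, NS w -> 2%:R * q * F w + (-1) * emul X (mono [:: z]) w = 0.
  move=> w Hw; rewrite (HF w); last by rewrite /good negb_and Hw.
  case: (boolP (suffix [:: z] w)) => [/suffixP [y Ey]|Hn]; last first.
    by rewrite emul_mono_r_nsuf //; ring.
  rewrite Ey emul_mono_r_suf HX; first ring.
  apply/negP => /andP [Hys Hya]; move: Hw; rewrite Ey => /negP; apply.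
  apply: sorted_rcons_lt => // x Hx; move/allP: Hya => /(_ x Hx).
  rewrite !inE => /orP [/eqP -> //|]; exact: Hz.
have R3 := redP_ctx a HGY Hv3.
have Hgg : forall y, Gzs z s y = mono [:: z; s] y +
    1 * (mono [:: s; z] y + (- (2%:R * q)) * mono [::] y).
  by move=> y; rewrite /Gzs /eadd /escale; ring.
have Hgg2 : forall y, mono [:: s; z] y + (- (2%:R * q)) * mono [::] y =
    mono [:: s; z] y + (- (2%:R * q)) * mono [::] y by [].
have E1 : forall x, emul F (mono [:: z; s]) x + a * emul G (mono [:: s]) x =
   a * emul G (mono [:: s]) x + 1 * emul F (mono [:: z; s]) x by move=> x; ring.
have E2 : forall x, a * emul G (mono [:: s]) x +
    1 * (emul F (mono [:: z; s]) x - emul F (Gzs z s) x) =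
    (2%:R * q * F x + a * emul G (mono [:: s]) x) +
      (-1) * emul (emul F (mono [:: s])) (mono [:: z]) x.
  move=> x; rewrite (emul_linr F Hgg) (emul_linr F Hgg2) emul_nil emul_mono_rr /=; ring.
have E3 : forall x, (2%:R * q * F x + a * emul G (mono [:: s]) x) +
      (-1) * emul X (mono [:: z]) x =
    (2%:R * q * F x + (-1) * emul X (mono [:: z]) x) + a * emul G (mono [:: s]) x.
  by move=> x; ring.
have E4 : forall x, (2%:R * q * F x + (-1) * emul X (mono [:: z]) x) + a * Y x =
    - emul X (mono [:: z]) x + 2%:R * q * F x + a * Y x by move=> x; ring.
apply: redP_trans (redP_extl E1 R1) _.
apply: redP_trans (redP_extl E2 R2) _.
exact: (redP_extl E3 (redP_extr E4 R3)).
Qed.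

End Dev3.

Section Dev4.
Variables (d : Order.disp_t) (S : finOrderType d) (R : comPzRingType) (q : R).
Local Notation word := (seq S).
Local Notation elt := (word -> R).
Local Notation NS := (fun w : word => ~~ sorted <%O w).

Definition claim (J : {set S}) : Prop := forall s : S,
  (s \in J ->
     redP q NS (emul (tau_plus q J) (mono [:: s]))
               (escale ((-1) ^+ (#|J|.+1) * q) (tau_minus q J))
  /\ redP q NS (emul (tau_minus q J) (mono [:: s]))
               (escale ((-1) ^+ (#|J|.+1)) (tau_plus q J)))
  /\
  (s \notin J ->
     let J'' := [set j in J | (s < j)%O] in
     redP q NS (emul (tau_plus q J) (mono [:: s]))
               (eadd (escale ((-1) ^+ #|J''|) (tau_plus q (s |: J)))
                     (escale ((-1) ^+ (#|J|.+1) * q) (tau_minus q J)))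
  /\ redP q NS (emul (tau_minus q J) (mono [:: s]))
               (eadd (escale ((-1) ^+ #|J''|) (tau_minus q (s |: J)))
                     (escale ((-1) ^+ (#|J|.+1)) (tau_plus q J)))).

Lemma top_case (J : {set S}) (s : S) : (forall j, j \in J -> (j < s)%O) ->
     let J'' := [set j in J | (s < j)%O] in
     redP q NS (emul (tau_plus q J) (mono [:: s]))
               (eadd (escale ((-1) ^+ #|J''|) (tau_plus q (s |: J)))
                     (escale ((-1) ^+ (#|J|.+1) * q) (tau_minus q J)))
  /\ redP q NS (emul (tau_minus q J) (mono [:: s]))
               (eadd (escale ((-1) ^+ #|J''|) (tau_minus q (s |: J)))
                     (escale ((-1) ^+ (#|J|.+1)) (tau_plus q J))).
Proof.
move=> Hs J''.
have HJ'' : J'' = set0.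
  apply/setP => j; rewrite /J'' !inE; case Hj: (j \in J) => //=.
  by rewrite lt_gtF ?Hs.
rewrite HJ'' cards0 expr0; split; apply: redP_refl => x.
  by rewrite /eadd /escale (tau_plus_rec q Hs) exprS; ring.
by rewrite /eadd /escale (tau_minus_rec q Hs) exprS; ring.
Qed.


Lemma supp_sc (L : {set S}) (F : elt) c : (forall w, ~~ good L w -> F w = 0) ->
  forall w, ~~ good L w -> escale c F w = 0.
Proof. by move=> H w Hw; rewrite /escale H // mulr0. Qed.

Lemma supp_sub (K L : {set S}) (F : elt) : K \subset L -> (forall w, ~~ good K w -> F w = 0) ->
  forall w, ~~ good L w -> F w = 0.
Proof.
move=> HKL H w Hw; apply: H; apply/negP => Hg; move/negP: Hw; apply; exact: good_sub Hg.
Qed.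

Lemma main (J : {set S}) : claim J.
Proof.
elim/set_max_ind: J => [|z K Hz IH] s.
  split=> Hs; first by rewrite inE in Hs.
  by apply: top_case => j; rewrite inE.
have zK : z \notin K by apply/negP => /Hz; rewrite ltxx.
have cJ : #|z |: K| = #|K|.+1 by rewrite cardsU1 zK.
have HA := @tau_plus_supp _ _ _ q K.
have HB := @tau_minus_supp _ _ _ q K.
have DA : forall t x, emul (tau_plus q (z |: K)) (mono [:: t]) x =
    emul (tau_plus q K) (mono [:: z; t]) x +
    ((-1) ^+ #|K| * q) * emul (tau_minus q K) (mono [:: t]) x.
  by move=> t x; rewrite (emul_lin (mono [:: t]) (tau_plus_rec q Hz)) emul_mono_rr.
have DB : forall t x, emul (tau_minus q (z |: K)) (mono [:: t]) x =
    emul (tau_minus q K) (mono [:: z; t]) x +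
    ((-1) ^+ #|K|) * emul (tau_plus q K) (mono [:: t]) x.
  by move=> t x; rewrite (emul_lin (mono [:: t]) (tau_minus_rec q Hz)) emul_mono_rr.
have sgnK : (-1) ^+ #|K| = (-1) ^+ (odd #|K|) :> R by rewrite signr_odd.
case: (ltgtP s z) => Hsz.
-
  have sJ : (s \in z |: K) = (s \in K) by rewrite !inE (lt_eqF Hsz).
  have [IHin IHout] := IH s.
  have KsK : K \subset s |: K by apply/subsetP => j Hj; rewrite inE Hj orbT.
  split=> Hs.
  + have HsK : s \in K by rewrite -sJ.
    have [R1 R2] := IHin HsK.
    have HX := supp_sub KsK (supp_sc ((-1) ^+ #|K|.+1 * q) HB).
    have HY := supp_sub KsK (supp_sc ((-1) ^+ #|K|.+1) HA).
    split.
    * apply: (redP_extl (DA s)).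
      apply: (redP_extr _ (step_lt ((-1) ^+ #|K| * q) Hz Hsz HA HB HX R1 R2)) => x.
      rewrite /escale emul_scale (tau_minus_rec q Hz) cJ !exprS sgnK.
      by case: (odd #|K|) => /=; ring.
    * apply: (redP_extl (DB s)).
      apply: (redP_extr _ (step_lt ((-1) ^+ #|K|) Hz Hsz HB HA HY R2 R1)) => x.
      rewrite /escale emul_scale (tau_plus_rec q Hz) cJ !exprS sgnK.
      by case: (odd #|K|) => /=; ring.
  + have HsK : s \notin K by rewrite -sJ.
    have [R1 R2] := IHout HsK.
    set K'' := [set j in K | (s < j)%O] in R1 R2 *.
    have HzsK : forall j, j \in s |: K -> (j < z)%O.
      by move=> j; rewrite !inE => /orP [/eqP -> //|]; exact: Hz.
    have HX : forall w, ~~ good (s |: K) w ->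
      eadd (escale ((-1) ^+ #|K''|) (tau_plus q (s |: K)))
           (escale ((-1) ^+ #|K|.+1 * q) (tau_minus q K)) w = 0.
      move=> w Hw; rewrite /eadd (supp_sc _ (@tau_plus_supp _ _ _ q _)) //.
      by rewrite (supp_sub KsK (supp_sc _ HB)) // addr0.
    have HY : forall w, ~~ good (s |: K) w ->
      eadd (escale ((-1) ^+ #|K''|) (tau_minus q (s |: K)))
           (escale ((-1) ^+ #|K|.+1) (tau_plus q K)) w = 0.
      move=> w Hw; rewrite /eadd (supp_sc _ (@tau_minus_supp _ _ _ q _)) //.
      by rewrite (supp_sub KsK (supp_sc _ HA)) // addr0.
    have cJ'' : #|[set j in z |: K | (s < j)%O]| = #|K''|.+1.
      rewrite (_ : [set j in z |: K | (s < j)%O] = z |: K'') ?cardsU1; last first.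
        apply/setP => j; rewrite !inE; case: eqP => [->|] //=; by rewrite Hsz.
      by rewrite inE (negbTE zK).
    have EJ : s |: (z |: K) = z |: (s |: K) by rewrite setUCA.
    have csK : #|s |: K| = #|K|.+1 by rewrite cardsU1 HsK.
    split.
    * apply: (redP_extl (DA s)).
      apply: (redP_extr _ (step_lt ((-1) ^+ #|K| * q) Hz Hsz HA HB HX R1 R2)) => x.
      rewrite /eadd /escale.
      rewrite (emul_lin (mono [:: z]) (_ : forall y, _ = escale ((-1) ^+ #|K''|)
           (tau_plus q (s |: K)) y + ((-1) ^+ #|K|.+1 * q) * tau_minus q K y)); last by [].
      rewrite /escale emul_scale cJ'' EJ (tau_plus_rec q HzsK) (tau_minus_rec q Hz) cJ csK.
      rewrite !exprS sgnK; by case: (odd #|K|) => /=; ring.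
    * apply: (redP_extl (DB s)).
      apply: (redP_extr _ (step_lt ((-1) ^+ #|K|) Hz Hsz HB HA HY R2 R1)) => x.
      rewrite /eadd /escale.
      rewrite (emul_lin (mono [:: z]) (_ : forall y, _ = escale ((-1) ^+ #|K''|)
           (tau_minus q (s |: K)) y + ((-1) ^+ #|K|.+1) * tau_plus q K y)); last by [].
      rewrite /escale emul_scale cJ'' EJ (tau_minus_rec q HzsK) (tau_plus_rec q Hz) cJ csK.
      rewrite !exprS sgnK; by case: (odd #|K|) => /=; ring.
-
  have Hall : forall j, j \in z |: K -> (j < s)%O.
    move=> j; rewrite !inE => /orP [/eqP -> //|/Hz Hj]; exact: lt_trans Hj Hsz.
  have sJ : s \notin z |: K by apply/negP => /Hall; rewrite ltxx.
  split=> Hs; first by rewrite Hs in sJ.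
  exact: top_case Hall.
-
  subst s; split=> Hs; last by rewrite !inE eqxx in Hs.
  split.
  + apply: (redP_extl (DA z)).
    apply: (redP_extr _ (step_eq q ((-1) ^+ #|K| * q) zK HA HB)) => x.
    rewrite /escale (tau_minus_rec q Hz) cJ !exprS sgnK.
    by case: (odd #|K|) => /=; ring.
  + apply: (redP_extl (DB z)).
    apply: (redP_extr _ (step_eq q ((-1) ^+ #|K|) zK HB HA)) => x.
    rewrite /escale (tau_plus_rec q Hz) cJ !exprS sgnK.
    by case: (odd #|K|) => /=; ring.
Qed.

End Dev4.

Unset Implicit Arguments.

Theorem lemma3p7 (d : Order.disp_t) (S : finOrderType d) (R : comPzRingType) (q : R)
    (J : {set S}) (s : S) :
  (s \in J ->
     reduces q (emul (tau_plus q J) (mono [:: s]))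
               (escale ((-1) ^+ (#|J|.+1) * q) (tau_minus q J))
  /\ reduces q (emul (tau_minus q J) (mono [:: s]))
               (escale ((-1) ^+ (#|J|.+1)) (tau_plus q J)))
  /\
  (s \notin J ->
     let J'' := [set j in J | (s < j)%O] in
     reduces q (emul (tau_plus q J) (mono [:: s]))
               (eadd (escale ((-1) ^+ #|J''|) (tau_plus q (s |: J)))
                     (escale ((-1) ^+ (#|J|.+1) * q) (tau_minus q J)))
  /\ reduces q (emul (tau_minus q J) (mono [:: s]))
               (eadd (escale ((-1) ^+ #|J''|) (tau_minus q (s |: J)))
                     (escale ((-1) ^+ (#|J|.+1)) (tau_plus q J)))).
Proof.
have [H1 H2] := main q J s.
split=> Hs.
  by have [A B] := H1 Hs; split; [exact: redP_reduces A | exact: redP_reduces B].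
by have [A B] := H2 Hs; split; [exact: redP_reduces A | exact: redP_reduces B].
Qed.
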